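(* Let $I_{-1}:=\iint_T\frac{dx\,dy}{xy(-\ln xy)}$ and, for $n\ge0$, $I_n:=\iint_T \frac{(-\ln xy)^n}{xy}\,dx\,dy$. Then \[ I_{-1}=\sum_{n=0}^\infty(-1)^n\frac{I_n}{(n+1)!}+\int_0^1\frac{\operatorname{li}(x-x^2)}{x}\,dx+1, \] where the series converges.
   Context: $T:=\{(x,y)\in[0,1]^2 : x+y\ge 1\}$. The logarithmic integral is $\operatorname{li}(u):=\int_0^u\frac{dv}{\ln v}$ for $0<u<1$. *)

(* Defs.v *)
From Stdlib Require Import Reals.
Open Scope R_scope.

Definition improper_int (f : R -> R) (a b l : R) : Prop :=
  (forall c d, a < c -> c <= d -> d < b -> inhabited (Riemann_integrable f c d)) /\
  (forall eps, 0 < eps -> exists delta, 0 < delta /\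
     forall c d (pr : Riemann_integrable f c d),
       a < c -> c < a + delta -> b - delta < d -> d < b -> c <= d ->
       Rabs (RiemannInt pr - l) < eps).

(* Integral over T = {(x,y) in [0,1]^2 : x + y >= 1}, computed as the
   iterated (improper) integral  int_0^1 ( int_{1-x}^1 f x y dy ) dx.
   (All integrands considered are nonnegative on T, so by Tonelli this is
   the double integral.) *)
Definition int_T (f : R -> R -> R) (l : R) : Prop :=
  exists g : R -> R,
    (forall x, 0 < x < 1 -> improper_int (fun y => f x y) (1 - x) 1 (g x)) /\
    improper_int g 0 1 l.

Definition li_is (u l : R) : Prop := improper_int (fun v => / ln v) 0 u l.

(* Main.v *)
Require Import Defs.
From Stdlib Require Import Reals Lra Lia Factorial IndefiniteDescription.
From Coquelicot Require Import Coquelicot.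
Open Scope R_scope.

Definition imp (f : R -> R) (a b l : R) : Prop :=
  (forall c d, a < c -> c <= d -> d < b -> ex_RInt f c d) /\
  (forall eps, 0 < eps -> exists delta, 0 < delta /\
     forall c d, a < c -> c < a + delta -> b - delta < d -> d < b -> c <= d ->
       Rabs (RInt f c d - l) < eps).

Lemma imp_improper f a b l : imp f a b l -> improper_int f a b l.
Proof.
  intros [H1 H2]; split.
  - intros c d Hc Hcd Hd. constructor. apply ex_RInt_Reals_0. auto.
  - intros eps Heps. destruct (H2 eps Heps) as [delta [Hd H]].
    exists delta; split; auto. intros c d pr Hc1 Hc2 Hd1 Hd2 Hcd.
    rewrite <- RInt_Reals. auto.
Qed.

Lemma imp_ext f g a b l : (forall x, a < x < b -> f x = g x) -> imp f a b l -> imp g a b l.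
Proof.
  intros E [H1 H2]; split.
  - intros c d Hc Hcd Hd. apply ex_RInt_ext with f; [|auto].
    intros x Hx. rewrite Rmin_left in Hx by lra. rewrite Rmax_right in Hx by lra. apply E; lra.
  - intros eps Heps. destruct (H2 eps Heps) as [delta [Hd H]].
    exists delta; split; auto. intros c d Hc1 Hc2 Hd1 Hd2 Hcd.
    rewrite <- (RInt_ext f). auto.
    intros x Hx. rewrite Rmin_left in Hx by lra. rewrite Rmax_right in Hx by lra. apply E; lra.
Qed.

Lemma imp_plus f g a b l m : imp f a b l -> imp g a b m -> imp (fun x => f x + g x) a b (l + m).
Proof.
  intros [F1 F2] [G1 G2]; split.
  - intros c d Hc Hcd Hd. apply (ex_RInt_plus f g); auto.
  - intros eps Heps. destruct (F2 (eps/2)) as [d1 [Hd1 H1]]; [lra|].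
    destruct (G2 (eps/2)) as [d2 [Hd2 H2]]; [lra|].
    exists (Rmin d1 d2); split. apply Rmin_pos; auto.
    intros c d Hc1 Hc2 Hdd1 Hdd2 Hcd.
    assert (m1 := Rmin_l d1 d2). assert (m2 := Rmin_r d1 d2).
    rewrite (RInt_plus f g) by auto.
    unfold plus; simpl.
    specialize (H1 c d Hc1 ltac:(lra) ltac:(lra) Hdd2 Hcd).
    specialize (H2 c d Hc1 ltac:(lra) ltac:(lra) Hdd2 Hcd).
    apply Rabs_def2 in H1; apply Rabs_def2 in H2. apply Rabs_def1; lra.
Qed.

Lemma imp_scal k f a b l : imp f a b l -> imp (fun x => k * f x) a b (k * l).
Proof.
  intros [F1 F2]; split.
  - intros c d Hc Hcd Hd. apply (ex_RInt_scal f); auto.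
  - intros eps Heps.
    assert (Hk : 0 < Rabs k + 1) by (pose proof (Rabs_pos k); lra).
    destruct (F2 (eps/(Rabs k + 1))) as [d1 [Hd1 H1]]. apply Rdiv_lt_0_compat; lra.
    exists d1; split; auto. intros c d Hc1 Hc2 Hdd1 Hdd2 Hcd.
    rewrite (RInt_scal f) by auto. unfold scal; simpl; unfold mult; simpl.
    replace (k * RInt f c d - k * l) with (k * (RInt f c d - l)) by ring.
    rewrite Rabs_mult. specialize (H1 c d Hc1 Hc2 Hdd1 Hdd2 Hcd).
    apply Rle_lt_trans with ((Rabs k + 1) * Rabs (RInt f c d - l)).
    apply Rmult_le_compat_r. apply Rabs_pos. lra.
    apply Rmult_lt_reg_l with (/ (Rabs k + 1)). apply Rinv_0_lt_compat; lra.
    rewrite <- Rmult_assoc, Rinv_l by lra. unfold Rdiv in H1. lra.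
Qed.

Lemma imp_pick a b delta : a < b -> 0 < delta -> exists c d,
  a < c /\ c < a + delta /\ b - delta < d /\ d < b /\ c <= d.
Proof.
  intros Hab Hd. set (h := Rmin delta ((b - a)/2) / 2).
  assert (0 < Rmin delta ((b-a)/2)) by (apply Rmin_pos; lra).
  assert (Rmin delta ((b-a)/2) <= delta) by apply Rmin_l.
  assert (Rmin delta ((b-a)/2) <= (b-a)/2) by apply Rmin_r.
  exists (a + h), (b - h). unfold h; repeat split; lra.
Qed.

Lemma imp_le f g a b l m : a < b -> imp f a b l -> imp g a b m ->
  (forall x, a < x < b -> f x <= g x) -> l <= m.
Proof.
  intros Hab [F1 F2] [G1 G2] Hfg.
  destruct (Rle_or_lt l m) as [|Hlt]; auto. exfalso.
  destruct (F2 ((l - m)/2)) as [d1 [Hd1 H1]]; [lra|].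
  destruct (G2 ((l - m)/2)) as [d2 [Hd2 H2]]; [lra|].
  assert (m1 := Rmin_l d1 d2). assert (m2 := Rmin_r d1 d2).
  destruct (imp_pick a b (Rmin d1 d2)) as [c [d [? [? [? [? ?]]]]]]; auto. apply Rmin_pos; auto.
  specialize (H1 c d ltac:(lra) ltac:(lra) ltac:(lra) ltac:(lra) ltac:(lra)).
  specialize (H2 c d ltac:(lra) ltac:(lra) ltac:(lra) ltac:(lra) ltac:(lra)).
  assert (RInt f c d <= RInt g c d).
  { apply RInt_le; auto. intros x Hx; apply Hfg; lra. }
  apply Rabs_def2 in H1; apply Rabs_def2 in H2. lra.
Qed.

Lemma imp_bound f a b l B : a < b -> imp f a b l ->
  (forall c d, a < c -> c <= d -> d < b -> RInt f c d <= B) -> l <= B.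
Proof.
  intros Hab [F1 F2] HB.
  destruct (Rle_or_lt l B) as [|Hlt]; auto. exfalso.
  destruct (F2 ((l - B)/2)) as [d1 [Hd1 H1]]; [lra|].
  destruct (imp_pick a b d1) as [c [d [? [? [? [? ?]]]]]]; auto.
  specialize (H1 c d ltac:(lra) ltac:(lra) ltac:(lra) ltac:(lra) ltac:(lra)).
  specialize (HB c d ltac:(lra) ltac:(lra) ltac:(lra)).
  apply Rabs_def2 in H1. lra.
Qed.

Definition cont_on (f : R -> R) a b := forall x, a < x < b -> continuous f x.

Lemma cont_ex_RInt f a b c d : cont_on f a b -> a < c -> c <= d -> d < b -> ex_RInt f c d.
Proof.
  intros H Hc Hcd Hd. apply (ex_RInt_continuous (V:=R_CompleteNormedModule)). intros z Hz.
  rewrite Rmin_left in Hz by lra. rewrite Rmax_right in Hz by lra. apply H; lra.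
Qed.

Lemma imp_exists f a b B : a < b -> cont_on f a b -> (forall x, a < x < b -> 0 <= f x) ->
  (forall c d, a < c -> c <= d -> d < b -> RInt f c d <= B) ->
  exists l, imp f a b l.
Proof.
  intros Hab Hc Hpos HB.
  set (E := fun r => exists c d, a < c /\ c <= d /\ d < b /\ r = RInt f c d).
  assert (Hb : bound E). { exists B. intros r [c [d [? [? [? ->]]]]]. auto. }
  assert (Hne : exists r, E r). { exists (RInt f ((a+b)/2) ((a+b)/2)). exists ((a+b)/2), ((a+b)/2). repeat split; lra. }
  destruct (completeness E Hb Hne) as [l [Hub Hlub]].
  exists l. split.
  - intros c d ? ? ?. eapply cont_ex_RInt; eauto.
  - intros eps Heps.
    assert (exists c0 d0, a < c0 /\ c0 <= d0 /\ d0 < b /\ l - eps < RInt f c0 d0) as [c0 [d0 [? [? [? Hgt]]]]].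
    { apply Classical_Prop.NNPP. intro Hn.
      assert (l <= l - eps); [|lra]. apply Hlub. intros r [c [d [? [? [? ->]]]]].
      apply Rnot_lt_le. intro. apply Hn. exists c, d. repeat split; auto. }
    exists (Rmin (c0 - a) (b - d0)). split. apply Rmin_pos; lra.
    intros c d Hc1 Hc2 Hd1 Hd2 Hcd.
    assert (m1 := Rmin_l (c0 - a) (b - d0)). assert (m2 := Rmin_r (c0 - a) (b - d0)).
    assert (RInt f c d <= l). { apply Hub. exists c, d. repeat split; auto. }
    assert (RInt f c0 d0 <= RInt f c d).
    { assert (e1 : ex_RInt f c c0) by (eapply cont_ex_RInt; eauto; lra).
      assert (e2 : ex_RInt f c0 d0) by (eapply cont_ex_RInt; eauto; lra).
      assert (e3 : ex_RInt f d0 d) by (eapply cont_ex_RInt; eauto; lra).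
      rewrite <- (RInt_Chasles f c d0 d); [|eapply ex_RInt_Chasles; eauto|auto].
      rewrite <- (RInt_Chasles f c c0 d0); auto. unfold plus; simpl.
      assert (0 <= RInt f c c0) by (apply RInt_ge_0; auto; [lra|intros; apply Hpos; lra]).
      assert (0 <= RInt f d0 d) by (apply RInt_ge_0; auto; [lra|intros; apply Hpos; lra]).
      lra. }
    apply Rabs_def1; lra.
Qed.

Lemma RInt_deriv F f c d : c <= d -> (forall x, c <= x <= d -> is_derive F x (f x)) ->
  (forall x, c <= x <= d -> continuous f x) -> ex_RInt f c d /\ RInt f c d = F d - F c.
Proof.
  intros Hcd HD HC.
  assert (H : is_RInt f c d (minus (F d) (F c))).
  { apply is_RInt_derive; intros x Hx; rewrite Rmin_left in Hx by lra; rewrite Rmax_right in Hx by lra; auto. }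
  split. exists (minus (F d) (F c)); auto.
  apply is_RInt_unique in H. rewrite H. reflexivity.
Qed.

Lemma imp_deriv F f a b A B : a < b ->
  (forall x, a < x < b -> is_derive F x (f x)) -> cont_on f a b ->
  (forall eps, 0 < eps -> exists del, 0 < del /\ forall x, a < x < a + del -> x < b -> Rabs (F x - A) < eps) ->
  (forall eps, 0 < eps -> exists del, 0 < del /\ forall x, b - del < x < b -> a < x -> Rabs (F x - B) < eps) ->
  imp f a b (B - A).
Proof.
  intros Hab HD HC LA LB. split.
  - intros c d ? ? ?. eapply cont_ex_RInt; eauto.
  - intros eps Heps.
    destruct (LA (eps/2)) as [d1 [Hd1 H1]]; [lra|].
    destruct (LB (eps/2)) as [d2 [Hd2 H2]]; [lra|].
    exists (Rmin d1 d2); split. apply Rmin_pos; auto.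
    intros c d Hc1 Hc2 Hdd1 Hdd2 Hcd.
    assert (m1 := Rmin_l d1 d2). assert (m2 := Rmin_r d1 d2).
    destruct (RInt_deriv F f c d Hcd) as [_ ->].
    + intros; apply HD; lra.
    + intros; apply HC; lra.
    + specialize (H1 c ltac:(lra) ltac:(lra)). specialize (H2 d ltac:(lra) ltac:(lra)).
      apply Rabs_def2 in H1; apply Rabs_def2 in H2. apply Rabs_def1; lra.
Qed.

Lemma cont_lim F x : continuous F x -> forall eps, 0 < eps -> exists del, 0 < del /\
  forall y, Rabs (y - x) < del -> Rabs (F y - F x) < eps.
Proof.
  intros H eps Heps.
  apply (proj2 (continuity_pt_filterlim F x)) in H.
  destruct (H eps Heps) as [del [Hd Hf]]. exists del; split; auto.
  intros y Hy. destruct (Req_dec y x) as [->|Hne]. rewrite Rminus_eq_0, Rabs_R0; auto.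
  apply Hf. unfold D_x, no_cond; repeat split; auto.
Qed.

Lemma imp_closed F f a b : a < b -> (forall x, a <= x <= b -> is_derive F x (f x)) ->
  (forall x, a <= x <= b -> continuous f x) -> imp f a b (F b - F a).
Proof.
  intros Hab HD HC. apply (imp_deriv F f a b (F a) (F b)); auto.
  - intros; apply HD; lra.
  - intros x Hx; apply HC; lra.
  - intros eps Heps. destruct (cont_lim F a (ex_derive_continuous F a (ex_intro _ _ (HD a ltac:(lra)))) eps Heps) as [d [Hd H]].
    exists d; split; auto. intros x Hx _. apply H. rewrite Rabs_right; lra.
  - intros eps Heps. destruct (cont_lim F b (ex_derive_continuous F b (ex_intro _ _ (HD b ltac:(lra)))) eps Heps) as [d [Hd H]].
    exists d; split; auto. intros x Hx _. apply H. rewrite Rabs_left; lra.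
Qed.

Lemma der_cont (f : R -> R) x : ex_derive f x -> continuous f x.
Proof. intros H. apply (ex_derive_continuous f x H). Qed.

Definition h (v : R) := / ln v.

Lemma ln_nonpos v : v <= 0 -> ln v = 0.
Proof. intros Hv. unfold ln. destruct (Rlt_dec 0 v) as [H|H]; [exfalso; lra|reflexivity]. Qed.

Lemma ln_neg01 v : 0 < v < 1 -> ln v < 0.
Proof. intros Hv. rewrite <- ln_1. apply ln_increasing; lra. Qed.

Lemma h_cont v : v < 1 -> continuous h v.
Proof.
  intros Hv. destruct (Rlt_or_le v 0) as [Hn|Hn]; [|destruct (Rle_lt_or_eq_dec 0 v Hn) as [Hp|Hz]].
  - apply (continuous_ext_loc h (fun _ => 0)).
    + exists (mkposreal (-v) ltac:(lra)). intros y Hy. unfold ball in Hy; simpl in Hy.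
      unfold AbsRing_ball, abs, minus, plus, opp in Hy; simpl in Hy.
      apply Rabs_def2 in Hy. unfold h. rewrite ln_nonpos by lra. rewrite Rinv_0; auto.
    + apply continuous_const.
  - apply der_cont. unfold h. auto_derive. split; auto. split; auto.
    pose proof (ln_neg01 v); lra.
  - subst v. apply (proj1 (continuity_pt_filterlim h 0)).
    intros eps Heps. exists (exp (- / eps)). split. apply exp_pos.
    intros y [_ Hy]. simpl in Hy. unfold R_dist in *. unfold h at 2. rewrite ln_nonpos by lra. rewrite Rinv_0.
    rewrite Rminus_0_r in *. unfold h. simpl; unfold R_dist; rewrite Rminus_0_r.
    destruct (Rle_or_lt y 0) as [Hy0|Hy0].
    + rewrite ln_nonpos, Rinv_0, Rabs_R0 by auto; auto.
    + rewrite Rabs_right in Hy by lra.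
      assert (ln y < - / eps). { rewrite <- (ln_exp (- / eps)). apply ln_increasing; auto. }
      assert (0 < / eps) by (apply Rinv_0_lt_compat; auto).
      rewrite Rabs_left. 2: { apply Rinv_lt_0_compat. lra. }
      replace eps with (/ / eps) by (field; lra).
      rewrite <- Rinv_opp. apply Rinv_lt_contravar. nra. lra.
Qed.

Definition li (u : R) := RInt h 0 u.

Lemma h_ex_RInt a b : a < 1 -> b < 1 -> ex_RInt h a b.
Proof.
  intros Ha Hb. apply (ex_RInt_continuous (V:=R_CompleteNormedModule)). intros z Hz.
  apply h_cont. assert (Rmax a b < 1) by (apply Rmax_lub_lt; auto). lra.
Qed.

Lemma li_deriv u : u < 1 -> is_derive li u (h u).
Proof.
  intros Hu. apply (is_derive_RInt h li 0 u).
  - exists (mkposreal (1 - u) ltac:(lra)). intros y Hy. unfold ball in Hy; simpl in Hy.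
      unfold AbsRing_ball, abs, minus, plus, opp in Hy; simpl in Hy.
      apply Rabs_def2 in Hy. unfold li. apply (RInt_correct (V:=R_CompleteNormedModule)). apply h_ex_RInt; lra.
  - apply h_cont; auto.
Qed.

Lemma li_cont u : u < 1 -> continuous li u.
Proof. intros Hu. apply der_cont. eexists; apply li_deriv; auto. Qed.

Lemma li_0 : li 0 = 0.
Proof. unfold li. rewrite RInt_point. reflexivity. Qed.

Lemma li_is_li u : 0 < u < 1 -> li_is u (li u).
Proof.
  intros Hu. unfold li_is. apply imp_improper. fold h.
  replace (li u) with (li u - li 0) by (rewrite li_0; ring).
  apply (imp_deriv li h 0 u (li 0) (li u)); [lra| | | |].
  - intros; apply li_deriv; lra.
  - intros x Hx; apply h_cont; lra.
  - intros eps Heps. destruct (cont_lim li 0 (li_cont 0 ltac:(lra)) eps Heps) as [d [Hd H]].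
    exists d; split; auto. intros x Hx _. apply H. rewrite Rabs_right; lra.
  - intros eps Heps. destruct (cont_lim li u (li_cont u ltac:(lra)) eps Heps) as [d [Hd H]].
    exists d; split; auto. intros x Hx _. apply H. rewrite Rabs_left; lra.
Qed.

Lemma RInt_h_bound a x : 0 <= a -> a <= x -> x < 1 -> 0 < x ->
  - ((x - a) / (- ln x)) <= RInt h a x <= 0.
Proof.
  intros Ha Hax Hx Hx0.
  assert (Hl : ln x < 0) by (apply ln_neg01; lra).
  assert (Hhv : forall v, a < v < x -> - / (- ln x) <= h v <= 0).
  { intros v Hv. assert (ln v < 0) by (apply ln_neg01; lra).
    assert (ln v <= ln x) by (apply ln_le; lra).
    unfold h. split.
    - assert (H1 : / (- ln v) <= / (- ln x)) by (apply Rinv_le_contravar; lra).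
      rewrite !Rinv_opp in H1. rewrite Rinv_opp. lra.
    - left. apply Rinv_lt_0_compat; auto. }
  split.
  - assert (RInt (fun _ => - / (- ln x)) a x <= RInt h a x).
    { apply RInt_le; auto. apply ex_RInt_const. apply h_ex_RInt; lra. intros; apply Hhv; auto. }
    rewrite RInt_const in H. unfold scal in H; simpl in H; unfold mult in H; simpl in H.
    unfold Rdiv. lra.
  - replace 0 with (RInt (fun _ => 0) a x).
    apply RInt_le; auto. apply h_ex_RInt; lra. apply ex_RInt_const. intros; apply Hhv; auto.
    rewrite RInt_const. unfold scal; simpl; unfold mult; simpl. ring.
Qed.

Lemma li_bound x : 0 < x < 1 -> - (x / (- ln x)) <= li x <= 0.
Proof. intros Hx. pose proof (RInt_h_bound 0 x). rewrite Rminus_0_r in H. apply H; lra. Qed.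

Lemma bernoulli x k : 0 <= x <= 1 -> 1 - INR k * (1 - x) <= x ^ k.
Proof.
  intros Hx. induction k as [|k IH]. simpl; lra.
  rewrite S_INR. simpl. assert (0 <= x ^ k) by (apply pow_le; lra).
  destruct (Rle_or_lt 0 (1 - INR k * (1 - x))).
  - assert (x * (1 - INR k * (1 - x)) <= x * x ^ k) by (apply Rmult_le_compat_l; lra).
    assert (0 <= INR k * ((1-x)*(1-x))) by (apply Rmult_le_pos; [apply pos_INR|nra]). nra.
  - assert (0 <= x * x ^ k) by (apply Rmult_le_pos; lra). assert (0 <= INR k) by apply pos_INR. nra.
Qed.

Definition Fli x := li x * ln x - x.

Lemma Fli_deriv x : 0 < x < 1 -> is_derive Fli x (li x / x).
Proof.
  intros Hx. unfold Fli.
  assert (H1 := li_deriv x ltac:(lra)).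
  assert (H2 : is_derive ln x (/ x)) by (auto_derive; [lra|field; lra]).
  apply is_derive_Reals in H1. apply is_derive_Reals in H2. apply is_derive_Reals.
  assert (Hl : ln x < 0) by (apply ln_neg01; lra).
  replace (li x / x) with (h x * ln x + li x * / x - 1).
  2: { unfold h. field. lra. }
  apply derivable_pt_lim_minus. apply derivable_pt_lim_mult; auto. apply derivable_pt_lim_id.
Qed.

Lemma li_ln_bound x : 0 < x < 1 -> 0 <= li x * ln x <= x.
Proof.
  intros Hx. assert (Hl : ln x < 0) by (apply ln_neg01; lra).
  destruct (li_bound x Hx) as [A B].
  replace (li x * ln x) with ((- li x) * (- ln x)) by ring.
  split. apply Rmult_le_pos; lra.
  assert (- li x <= x / (- ln x)) by lra.
  apply Rle_trans with (x / (- ln x) * (- ln x)).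
  apply Rmult_le_compat_r; lra. right; field; lra.
Qed.

Lemma li_ln_bound1 x k : 0 < x < 1 -> (1 <= k)%nat -> 0 <= li x * ln x <= / INR k + INR k * (1 - x).
Proof.
  intros Hx Hk. assert (Hl : ln x < 0) by (apply ln_neg01; lra).
  assert (Hk0 : 1 <= INR k) by (apply (le_INR 1); auto).
  assert (Hxk : 0 < x ^ k) by (apply pow_lt; lra).
  assert (Hxk1 : x ^ k <= x).
  { destruct k. lia. simpl. assert (x ^ k <= 1) by (rewrite <- (pow1 k); apply pow_incr; lra). nra. }
  assert (Hxk1' : x ^ k < 1) by lra.
  destruct (li_bound x Hx) as [_ Hle].
  destruct (li_bound (x ^ k) ltac:(lra)) as [A _].
  rewrite ln_pow in A by lra.
  destruct (RInt_h_bound (x ^ k) x ltac:(lra) Hxk1 ltac:(lra) ltac:(lra)) as [B _].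
  assert (E : li x = li (x ^ k) + RInt h (x ^ k) x).
  { unfold li. rewrite <- (RInt_Chasles h 0 (x ^ k) x). reflexivity.
    apply h_ex_RInt; lra. apply h_ex_RInt; lra. }
  set (L := - ln x) in *.
  assert (HL : 0 < L) by (unfold L; lra).
  assert (Hb := bernoulli x k ltac:(lra)).
  replace (li x * ln x) with ((- li x) * L) by (unfold L; ring).
  assert (C : - li x <= (x ^ k / INR k + (x - x ^ k)) / L).
  { assert (A' : - (x ^ k / (INR k * L)) <= li (x ^ k)).
    { replace (x ^ k / (INR k * L)) with (x ^ k / (- (INR k * ln x))) by (unfold L; field; lra). exact A. }
    replace ((x ^ k / INR k + (x - x ^ k)) / L) with (x ^ k / (INR k * L) + (x - x ^ k) / L) by (field; lra).
    lra. }
  split. apply Rmult_le_pos; lra.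
  apply Rle_trans with ((x ^ k / INR k + (x - x ^ k)) / L * L).
  apply Rmult_le_compat_r; lra.
  replace ((x ^ k / INR k + (x - x ^ k)) / L * L) with (x ^ k / INR k + (x - x ^ k)) by (field; lra).
  assert (x ^ k / INR k <= / INR k).
  { unfold Rdiv. rewrite <- (Rmult_1_l (/ INR k)) at 2. apply Rmult_le_compat_r. left; apply Rinv_0_lt_compat; lra. lra. }
  lra.
Qed.

Lemma cont_of_der f x l : derivable_pt_lim f x l -> continuous f x.
Proof. intros H. apply der_cont. exists l. apply is_derive_Reals. auto. Qed.

Lemma li_over_x_cont : cont_on (fun x => li x / x) 0 1.
Proof.
  intros x Hx.
  assert (D : derivable_pt_lim (li / id)%F x ((h x * id x - 1 * li x) / (id x)²)).
  { apply (derivable_pt_lim_div li id x (h x) 1). apply is_derive_Reals, li_deriv; lra. apply derivable_pt_lim_id. unfold id; lra. }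
  exact (cont_of_der _ _ _ D).
Qed.

Lemma imp_li_over_x : imp (fun x => li x / x) 0 1 (-1).
Proof.
  replace (-1) with (-1 - 0) by ring.
  apply (imp_deriv Fli _ 0 1 0 (-1)); [lra| |apply li_over_x_cont| |].
  - intros; apply Fli_deriv; auto.
  - intros eps Heps. exists eps; split; auto. intros x Hx Hx1.
    assert (H := li_ln_bound x ltac:(lra)). unfold Fli. apply Rabs_def1; lra.
  - intros eps Heps.
    destruct (nfloor_ex (3 / eps)) as [m Hm]. { left; apply Rdiv_lt_0_compat; lra. }
    set (k := S m). assert (Hk : INR k = INR m + 1) by (unfold k; rewrite S_INR; auto).
    assert (Hk0 : 0 < INR k) by (pose proof (pos_INR m); lra).
    assert (Hik : / INR k < eps / 3).
    { apply Rmult_lt_reg_l with (INR k); auto. rewrite Rinv_r by lra.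
      assert (3 / eps * eps = 3) by (field; lra).
      assert (3 / eps < INR k) by lra.
      apply Rmult_lt_reg_r with (/ (eps/3)). apply Rinv_0_lt_compat; lra.
      replace (1 * / (eps / 3)) with (3 / eps) by (field; lra).
      replace (INR k * (eps / 3) * / (eps / 3)) with (INR k) by (field; lra). lra. }
    exists (Rmin (eps / (3 * INR k)) (eps / 3)). split. apply Rmin_pos; apply Rdiv_lt_0_compat; lra.
    intros x Hx Hx0.
    assert (m1 := Rmin_l (eps / (3 * INR k)) (eps / 3)). assert (m2 := Rmin_r (eps / (3 * INR k)) (eps / 3)).
    assert (H := li_ln_bound1 x k ltac:(lra) ltac:(unfold k; lia)).
    assert (INR k * (1 - x) < eps / 3).
    { assert (1 - x < eps / (3 * INR k)) by lra.
      apply Rmult_lt_compat_l with (r := INR k) in H0; auto.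
      replace (INR k * (eps / (3 * INR k))) with (eps / 3) in H0 by (field; lra). auto. }
    unfold Fli. apply Rabs_def1; lra.
Qed.

Definition g (n : nat) (x : R) :=
  ((- ln (x * (1 - x))) ^ (n + 1) - (- ln x) ^ (n + 1)) / (INR (n + 1) * x).
Definition gm1 (x : R) := (ln (- ln (x * (1 - x))) - ln (- ln x)) / x.

Lemma xy_bounds x y : 0 < x < 1 -> 1 - x <= y <= 1 -> 0 < x * y < 1.
Proof. intros. split; nra. Qed.

Lemma INRn1 n : 0 < INR (n + 1).
Proof. rewrite plus_INR; simpl; pose proof (pos_INR n); lra. Qed.

Lemma inner_m1 x : 0 < x < 1 ->
  improper_int (fun y => / (x * y * (- ln (x * y)))) (1 - x) 1 (gm1 x).
Proof.
  intros Hx. apply imp_improper.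
  set (F := fun y => - / x * ln (- ln (x * y))).
  replace (gm1 x) with (F 1 - F (1 - x)).
  2: { unfold F, gm1. rewrite Rmult_1_r. field. lra. }
  apply imp_closed. lra.
  - intros y Hy. destruct (xy_bounds x y Hx Hy).
    assert (ln (x * y) < 0) by (apply ln_neg01; lra).
    unfold F. auto_derive. repeat split; lra. field. repeat split; lra.
  - intros y Hy. destruct (xy_bounds x y Hx Hy).
    assert (ln (x * y) < 0) by (apply ln_neg01; lra).
    apply der_cont. auto_derive. repeat split; try lra.
    assert (0 < x * y * - ln (x * y)) by (apply Rmult_lt_0_compat; lra). lra.
Qed.

Lemma inner_n x n : 0 < x < 1 ->
  improper_int (fun y => (- ln (x * y)) ^ n / (x * y)) (1 - x) 1 (g n x).
Proof.
  intros Hx. apply imp_improper.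
  set (F := fun y => - / x * (- ln (x * y)) ^ (n + 1) / INR (n + 1)).
  assert (Hn := INRn1 n).
  replace (g n x) with (F 1 - F (1 - x)).
  2: { unfold F, g. rewrite Rmult_1_r. field. lra. }
  apply imp_closed. lra.
  - intros y Hy. destruct (xy_bounds x y Hx Hy).
    unfold F. auto_derive. repeat split; lra. replace (Init.Nat.pred (n + 1)) with n by lia.
    field. repeat split; lra.
  - intros y Hy. destruct (xy_bounds x y Hx Hy).
    apply der_cont. auto_derive. repeat split; lra.
Qed.

Lemma der_plus (f g : R -> R) (x df dg : R) : is_derive f x df -> is_derive g x dg ->
  is_derive (fun t => f t + g t) x (df + dg).
Proof. intros. apply (is_derive_plus f g); auto. Qed.
Lemma der_comp (f g : R -> R) (x df dg : R) : is_derive f (g x) df -> is_derive g x dg ->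
  is_derive (fun t => f (g t)) x (dg * df).
Proof. intros. apply (is_derive_comp f g); auto. Qed.
Lemma der_eq (f : R -> R) (x d1 d2 : R) : d1 = d2 -> is_derive f x d1 -> is_derive f x d2.
Proof. intros ->; auto. Qed.

Fixpoint A (n : nat) (u : R) : R :=
  match n with 0 => u | S m => u * (- ln u) ^ (S m) + INR (S m) * A m u end.

Lemma A_deriv n u : 0 < u -> is_derive (A n) u ((- ln u) ^ n).
Proof.
  intros Hu. induction n as [|m IH].
  - simpl. apply (der_eq _ _ 1); [reflexivity|]. auto_derive; auto.
  - simpl A. 
    assert (D1 : is_derive (fun u => u * (- ln u) ^ (S m)) u ((- ln u) ^ S m - INR (S m) * (- ln u) ^ m)).
    { auto_derive. auto. change (match m with 0%nat => 1 | S _ => INR m + 1 end) with (INR (S m)). simpl pow. field. lra. }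
    apply (der_eq _ _ ((- ln u) ^ S m - INR (S m) * (- ln u) ^ m + INR (S m) * (- ln u) ^ m)). ring.
    apply (der_plus (fun u => u * (- ln u) ^ (S m)) (fun u => INR (S m) * A m u)); auto.
    apply is_derive_scal; auto.
Qed.

Lemma A_formula n u : A n u = INR (fact n) * u * sum_f_R0 (fun k => (- ln u) ^ k / INR (fact k)) n.
Proof.
  induction n as [|m IH].
  - simpl. field.
  - change (A (S m) u) with (u * (- ln u) ^ (S m) + INR (S m) * A m u). rewrite IH.
    change (sum_f_R0 ?f (S m)) with (sum_f_R0 f m + f (S m)). cbv beta.
    set (s := sum_f_R0 _ m).
    change (fact (S m)) with (S m * fact m)%nat. rewrite mult_INR.
    assert (0 < INR (fact m)) by (apply lt_0_INR, lt_O_fact).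
    assert (0 < INR (S m)) by (apply lt_0_INR; lia).
    field. lra.
Qed.

Lemma A_bounds n u : 0 < u <= 1 -> 0 <= A n u <= INR (fact n).
Proof.
  intros Hu. rewrite A_formula.
  assert (Hl : 0 <= - ln u). { assert (ln u <= 0); [rewrite <- ln_1; apply ln_le; lra|lra]. }
  assert (Hf : 0 < INR (fact n)) by (apply lt_0_INR, lt_O_fact).
  assert (Hs : 0 <= sum_f_R0 (fun k => (- ln u) ^ k / INR (fact k)) n).
  { apply cond_pos_sum. intros k. apply Rdiv_le_0_compat. apply pow_le; auto. apply lt_0_INR, lt_O_fact. }
  assert (He := exp_ge_taylor (- ln u) n Hl).
  rewrite exp_Ropp, exp_ln in He by lra.
  split. apply Rmult_le_pos; [apply Rmult_le_pos|]; lra.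
  apply Rle_trans with (INR (fact n) * u * / u).
  apply Rmult_le_compat_l; [apply Rmult_le_pos|]; lra.
  right; field; lra.
Qed.

Definition kb (n : nat) (x : R) := 2 * (- ln (x / 2)) ^ n + 2 * (- ln ((1 - x) / 2)) ^ (n + 1) / INR (n + 1).
Definition Kb (n : nat) (x : R) := 4 * A n (x / 2) - 4 * A (n + 1) ((1 - x) / 2) / INR (n + 1).

Lemma Kb_deriv n x : 0 < x < 1 -> is_derive (Kb n) x (kb n x).
Proof.
  intros Hx. unfold Kb, kb. assert (Hn := INRn1 n).
  assert (D1 : is_derive (fun t => A n (t / 2)) x (/ 2 * (- ln (x / 2)) ^ n)).
  { apply (der_comp (A n) (fun t => t / 2)). apply A_deriv; lra. auto_derive; auto; field. }
  assert (D2 : is_derive (fun t => A (n+1) ((1 - t) / 2)) x (- / 2 * (- ln ((1 - x) / 2)) ^ (n + 1))).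
  { apply (der_comp (A (n+1)) (fun t => (1 - t) / 2)). apply A_deriv; lra. auto_derive; auto; field. }
  apply (der_eq _ _ (4 * (/ 2 * (- ln (x / 2)) ^ n) + (- (4 / INR (n+1))) * (- / 2 * (- ln ((1 - x) / 2)) ^ (n + 1)))).
  field; lra.
  apply (is_derive_ext (fun t => 4 * A n (t / 2) + - (4 / INR (n+1)) * A (n + 1) ((1 - t) / 2))).
  intros t; simpl; field; lra.
  apply (der_plus (fun t => 4 * A n (t / 2)) (fun t => - (4 / INR (n+1)) * A (n + 1) ((1 - t) / 2))).
  apply is_derive_scal; auto.
  apply is_derive_scal; exact D2.
Qed.

Lemma kb_cont n x : 0 < x < 1 -> continuous (kb n) x.
Proof. intros Hx. apply der_cont. unfold kb. auto_derive. assert (Hn := INRn1 n). repeat split; lra. Qed.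

Lemma Kb_diff n c d : 0 < c -> c <= d -> d < 1 -> Kb n d - Kb n c <= 8 * INR (fact n).
Proof.
  intros Hc Hcd Hd. unfold Kb.
  assert (Hn := INRn1 n).
  destruct (A_bounds n (d/2)) as [? ?]. lra. destruct (A_bounds n (c/2)) as [? ?]. lra.
  destruct (A_bounds (n+1) ((1-d)/2)) as [? ?]. lra. destruct (A_bounds (n+1) ((1-c)/2)) as [? ?]. lra.
  assert (Hf : INR (fact (n + 1)) = INR (n + 1) * INR (fact n)).
  { rewrite Nat.add_1_r. change (fact (S n)) with (S n * fact n)%nat. rewrite mult_INR. rewrite <- Nat.add_1_r. auto. }
  rewrite Hf in *.
  assert (A (n + 1) ((1 - c) / 2) / INR (n + 1) <= INR (fact n)).
  { apply Rmult_le_reg_l with (INR (n+1)); auto. replace (INR (n + 1) * (A (n + 1) ((1 - c) / 2) / INR (n + 1))) with (A (n + 1) ((1 - c) / 2)) by (field; lra). lra. }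
  assert (0 <= A (n + 1) ((1 - d) / 2) / INR (n + 1)) by (apply Rdiv_le_0_compat; lra).
  unfold Rdiv in *. lra.
Qed.

Lemma pow_diff_le a b n : 0 <= a <= b -> b ^ (S n) - a ^ (S n) <= INR (S n) * (b - a) * b ^ n.
Proof.
  intros Hab. induction n as [|m IH].
  - simpl. lra.
  - assert (0 <= a ^ S m <= b ^ S m) by (split; [apply pow_le; lra| apply pow_incr; lra]).
    replace (b ^ S (S m) - a ^ S (S m)) with (b * (b ^ S m - a ^ S m) + a ^ S m * (b - a)) by (simpl; ring).
    rewrite (S_INR (S m)).
    apply Rle_trans with (b * (INR (S m) * (b - a) * b ^ m) + b ^ S m * (b - a)).
    apply Rplus_le_compat. apply Rmult_le_compat_l; lra. apply Rmult_le_compat_r; lra.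
    right. simpl. ring.
Qed.

Lemma ln_bound1 x : 0 < x < 1 -> - ln (1 - x) <= x / (1 - x).
Proof.
  intros Hx. rewrite <- ln_Rinv by lra.
  assert (H := exp_ineq1_le (ln (/ (1 - x)))). rewrite exp_ln in H.
  2: apply Rinv_0_lt_compat; lra.
  replace (x / (1 - x)) with (/ (1 - x) - 1) by (field; lra). lra.
Qed.

Lemma g_nonneg n x : 0 < x < 1 -> 0 <= g n x.
Proof.
  intros Hx. unfold g. assert (Hn := INRn1 n).
  rewrite ln_mult by lra.
  assert (ln x < 0) by (apply ln_neg01; lra). assert (ln (1 - x) < 0) by (apply ln_neg01; lra).
  apply Rdiv_le_0_compat. 2: apply Rmult_lt_0_compat; lra.
  assert ((- ln x) ^ (n + 1) <= (- (ln x + ln (1 - x))) ^ (n + 1)) by (apply pow_incr; lra). lra.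
Qed.

Lemma g_le_kb n x : 0 < x < 1 -> g n x <= kb n x.
Proof.
  intros Hx. unfold g, kb. assert (Hn := INRn1 n).
  assert (l2 := ln_lt_2).
  rewrite ln_mult by lra. rewrite !ln_div by lra.
  assert (ln x < 0) by (apply ln_neg01; lra). assert (ln (1 - x) < 0) by (apply ln_neg01; lra).
  set (a := - ln x). set (M := - ln (1 - x)).
  replace (- (ln x + ln (1 - x))) with (a + M) by (unfold a, M; ring).
  replace (- (ln x - ln 2)) with (a + ln 2) by (unfold a; ring).
  replace (- (ln (1 - x) - ln 2)) with (M + ln 2) by (unfold M; ring).
  assert (0 < a) by (unfold a; lra). assert (0 < M) by (unfold M; lra).
  assert (P1 : 0 <= 2 * (a + ln 2) ^ n) by (apply Rmult_le_pos; [lra|apply pow_le; lra]).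
  assert (P2 : 0 <= 2 * (M + ln 2) ^ (n + 1) / INR (n + 1)).
  { apply Rdiv_le_0_compat; auto. apply Rmult_le_pos; [lra|apply pow_le; lra]. }
  destruct (Rle_or_lt x (1/2)) as [Hh|Hh].
  - assert (HM : M <= 2 * x).
    { assert (HB1 := ln_bound1 x Hx). fold M in HB1.
      assert (x / (1 - x) <= 2 * x).
      { apply Rmult_le_reg_r with (1 - x). lra. replace (x / (1 - x) * (1 - x)) with x by (field; lra). nra. }
      lra. }
    assert (HM2 : M <= ln 2).
    { unfold M. rewrite <- (Rinv_inv 2). rewrite ln_Rinv by lra. apply Ropp_le_contravar. apply ln_le; lra. }
    assert (Hd := pow_diff_le a (a + M) n ltac:(lra)).
    replace (n + 1)%nat with (S n) by lia. replace (n + 1)%nat with (S n) in P2 by lia.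
    assert (((a + M) ^ S n - a ^ S n) / (INR (S n) * x) <= M / x * (a + M) ^ n).
    { apply Rmult_le_reg_r with (INR (S n) * x). apply Rmult_lt_0_compat; [apply lt_0_INR; lia|lra].
      replace (((a + M) ^ S n - a ^ S n) / (INR (S n) * x) * (INR (S n) * x)) with ((a + M) ^ S n - a ^ S n).
      2: { field. split. lra. apply not_0_INR; lia. }
      replace (M / x * (a + M) ^ n * (INR (S n) * x)) with (INR (S n) * (a + M - a) * (a + M) ^ n).
      2: { field. lra. } auto. }
    assert (M / x * (a + M) ^ n <= 2 * (a + ln 2) ^ n).
    { apply Rmult_le_compat. apply Rdiv_le_0_compat; lra. apply pow_le; lra.
      apply Rmult_le_reg_r with x. lra. replace (M / x * x) with M by (field; lra). lra.
      apply pow_incr; lra. }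
    lra.
  - assert (Ha2 : a <= ln 2).
    { unfold a. rewrite <- (Rinv_inv 2). rewrite ln_Rinv by lra. apply Ropp_le_contravar. apply ln_le; lra. }
    assert (((a + M) ^ (n + 1) - a ^ (n + 1)) / (INR (n + 1) * x) <= 2 * (a + M) ^ (n + 1) / INR (n + 1)).
    { assert (0 <= a ^ (n + 1)) by (apply pow_le; lra).
      assert (0 <= (a + M) ^ (n + 1)) by (apply pow_le; lra).
      apply Rmult_le_reg_r with (INR (n + 1) * x). apply Rmult_lt_0_compat; lra.
      replace (((a + M) ^ (n + 1) - a ^ (n + 1)) / (INR (n + 1) * x) * (INR (n + 1) * x)) with ((a + M) ^ (n + 1) - a ^ (n + 1)) by (field; lra).
      replace (2 * (a + M) ^ (n + 1) / INR (n + 1) * (INR (n + 1) * x)) with (2 * x * (a + M) ^ (n + 1)) by (field; lra).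
      nra. }
    assert (2 * (a + M) ^ (n + 1) / INR (n + 1) <= 2 * (M + ln 2) ^ (n + 1) / INR (n + 1)).
    { unfold Rdiv. apply Rmult_le_compat_r. left; apply Rinv_0_lt_compat; lra.
      apply Rmult_le_compat_l. lra. apply pow_incr; lra. }
    lra.
Qed.

Lemma g_cont n : cont_on (g n) 0 1.
Proof.
  intros x Hx. apply der_cont. unfold g. assert (Hn := INRn1 n).
  assert (0 < x * (1 - x)) by nra.
  auto_derive. repeat split; try lra. apply Rmult_integral_contrapositive; split; lra.
Qed.

Lemma RInt_g_bound n c d : 0 < c -> c <= d -> d < 1 -> RInt (g n) c d <= 8 * INR (fact n).
Proof.
  intros Hc Hcd Hd.
  destruct (RInt_deriv (Kb n) (kb n) c d Hcd) as [Ek Rk].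
  - intros; apply Kb_deriv; lra.
  - intros; apply kb_cont; lra.
  - apply Rle_trans with (RInt (kb n) c d).
    apply RInt_le; auto. apply (cont_ex_RInt (g n) 0 1 c d (g_cont n)); lra.
    intros x Hx; apply g_le_kb; lra.
    rewrite Rk. apply Kb_diff; auto.
Qed.

Lemma I_exists n : exists l, imp (g n) 0 1 l /\ l <= 8 * INR (fact n).
Proof.
  assert (Hex : exists l, imp (g n) 0 1 l).
  { apply (imp_exists (g n) 0 1 (8 * INR (fact n))). lra. apply g_cont.
    intros; apply g_nonneg; auto. intros; apply RInt_g_bound; auto. }
  destruct Hex as [l Hl].
  - exists l; split; auto. apply (imp_bound (g n) 0 1); auto. lra.
    intros; apply RInt_g_bound; auto.
Qed.

Lemma deriv_bound (D E d e : R -> R) a b : a <= b ->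
  (forall t, a <= t <= b -> is_derive D t (d t)) ->
  (forall t, a <= t <= b -> is_derive E t (e t)) ->
  (forall t, a <= t <= b -> Rabs (d t) <= e t) ->
  Rabs (D b - D a) <= E b - E a.
Proof.
  intros Hab HD HE Hb.
  assert (Hmin : Rmin a b = a) by (apply Rmin_left; lra).
  assert (Hmax : Rmax a b = b) by (apply Rmax_right; lra).
  destruct (MVT_gen (fun t => E t - D t) a b (fun t => e t - d t)) as [c1 [Hc1 E1]].
  { intros x Hx. rewrite Hmin, Hmax in Hx.
      apply (der_plus E (fun t => - D t)). apply HE; lra.
      apply (is_derive_opp D x (d x)). apply HD; lra. }
  { intros x Hx. rewrite Hmin, Hmax in Hx. apply (proj2 (continuity_pt_filterlim _ _)).
      apply (der_cont (fun t => E t - D t) x). exists (e x - d x). apply (der_plus E (fun t => - D t)). apply HE; lra.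
      apply (is_derive_opp D x (d x)). apply HD; lra. }
  destruct (MVT_gen (fun t => E t + D t) a b (fun t => e t + d t)) as [c2 [Hc2 E2]].
  { intros x Hx. rewrite Hmin, Hmax in Hx.
      apply (der_plus E D). apply HE; lra. apply HD; lra. }
  { intros x Hx. rewrite Hmin, Hmax in Hx. apply (proj2 (continuity_pt_filterlim _ _)).
      apply (der_cont (fun t => E t + D t) x). exists (e x + d x). apply (der_plus E D). apply HE; lra. apply HD; lra. }
  rewrite Hmin, Hmax in *.
  simpl in E1, E2.
  assert (B1 := Hb c1 Hc1). assert (B2 := Hb c2 Hc2).
  apply Rabs_le_between in B1. apply Rabs_le_between in B2.
  assert (0 <= (e c1 - d c1) * (b - a)) by (apply Rmult_le_pos; lra).
  assert (0 <= (e c2 + d c2) * (b - a)) by (apply Rmult_le_pos; lra).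
  apply Rabs_le; lra.
Qed.

Definition Q (t : R) := ln t - li (exp (- t)).
Definition q (t : R) := (1 - exp (- t)) / t.

Lemma exp_neg_lt1 t : 0 < t -> 0 < exp (- t) < 1.
Proof. intros. split. apply exp_pos. rewrite <- exp_0. apply exp_increasing. lra. Qed.

Lemma Q_deriv t : 0 < t -> is_derive Q t (q t).
Proof.
  intros Ht. unfold Q, q. destruct (exp_neg_lt1 t Ht).
  assert (D1 : is_derive (fun t => li (exp (- t))) t ((- exp (- t)) * h (exp (- t)))).
  { apply (der_comp li (fun t => exp (- t))). apply li_deriv; lra. auto_derive; auto. ring. }
  unfold h in D1. rewrite ln_exp in D1.
  apply (der_eq _ _ (/ t + - ((- exp (- t)) * / - t))). field; lra.
  apply (der_plus ln (fun t => - li (exp (- t)))). auto_derive; auto. ring.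
  apply (is_derive_opp (fun t => li (exp (- t)))). auto.
Qed.

Lemma q_bounds t : 0 < t -> 0 <= q t <= 1.
Proof.
  intros Ht. unfold q. destruct (exp_neg_lt1 t Ht). assert (H1 := exp_ineq1_le (- t)).
  split. apply Rdiv_le_0_compat; lra.
  apply Rmult_le_reg_r with t; auto. replace ((1 - exp (- t)) / t * t) with (1 - exp (- t)) by (field; lra). lra.
Qed.

Definition P (x : R) := gm1 x - (li (x * (1 - x)) - li x) / x.

Lemma exp_mln z : 0 < z -> exp (- - ln z) = z.
Proof. intros. rewrite Ropp_involutive. apply exp_ln; auto. Qed.

Lemma P_Q x : 0 < x < 1 -> P x = (Q (- ln (x * (1 - x))) - Q (- ln x)) / x.
Proof.
  intros Hx. unfold P, Q, gm1. rewrite !exp_mln by nra. field. lra.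
Qed.

Lemma L_props x : 0 < x < 1 -> 0 < - ln x <= - ln (x * (1 - x)).
Proof.
  intros Hx. assert (ln x < 0) by (apply ln_neg01; lra). split. lra.
  apply Ropp_le_contravar. apply ln_le; nra.
Qed.

Lemma P_bounds x : 0 < x < 1 -> 0 <= P x <= g 0 x.
Proof.
  intros Hx. rewrite P_Q by auto. destruct (L_props x Hx) as [H1 H2].
  assert (B1 := deriv_bound (fun _ => 0) Q (fun _ => 0) q _ _ H2).
  assert (B2 := deriv_bound Q (fun t => t) q (fun _ => 1) _ _ H2).
  assert (Hg : g 0 x = (- ln (x * (1 - x)) - - ln x) / x).
  { unfold g. simpl. field. lra. }
  rewrite Hg.
  split.
  - apply Rdiv_le_0_compat; [|lra].
    assert (Rabs (0 - 0) <= Q (- ln (x * (1 - x))) - Q (- ln x)); [|rewrite Rminus_0_r, Rabs_R0 in H; auto].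
    apply B1. intros; auto_derive; auto. intros; apply Q_deriv; lra.
    intros t Ht. rewrite Rabs_R0. apply q_bounds; lra.
  - unfold Rdiv. apply Rmult_le_compat_r. left; apply Rinv_0_lt_compat; lra.
    assert (Rabs (Q (- ln (x * (1 - x))) - Q (- ln x)) <= - ln (x * (1 - x)) - - ln x).
    apply B2. intros; apply Q_deriv; lra. intros; auto_derive; auto.
    intros t Ht. destruct (q_bounds t ltac:(lra)). rewrite Rabs_right; lra.
    apply Rabs_le_between in H. lra.
Qed.

Definition T (K : nat) (t : R) := sum_f_R0 (fun m => (- t) ^ m / INR (fact m)) K.
Definition qN (N : nat) (t : R) := sum_f_R0 (fun n => (-1) ^ n * t ^ n / INR (fact (n + 1))) N.
Definition QN (N : nat) (t : R) := sum_f_R0 (fun n => (-1) ^ n * t ^ (n + 1) / (INR (n + 1) * INR (fact (n + 1)))) N.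
Definition PN (N : nat) (x : R) := sum_f_R0 (fun n => (-1) ^ n * g n x / INR (fact (n + 1))) N.

Lemma der_ext (f g : R -> R) (x l : R) : (forall t, f t = g t) -> is_derive f x l -> is_derive g x l.
Proof. intros. apply (is_derive_ext f g); auto. Qed.

Lemma fact_pos n : 0 < INR (fact n).
Proof. apply lt_0_INR, lt_O_fact. Qed.

Lemma fact_S n : INR (fact (S n)) = INR (S n) * INR (fact n).
Proof. change (fact (S n)) with (S n * fact n)%nat. apply mult_INR. Qed.

Lemma T_S K t : T (S K) t = T K t + (- t) ^ (S K) / INR (fact (S K)).
Proof. reflexivity. Qed.

Lemma T_0 K : T K 0 = 1.
Proof.
  induction K as [|K IH]. unfold T; simpl; field.
  rewrite T_S, IH. rewrite Ropp_0, pow_i by lia. unfold Rdiv; ring.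
Qed.

Lemma term_deriv K s : is_derive (fun t => (- t) ^ (S K) / INR (fact (S K))) s (- ((- s) ^ K / INR (fact K))).
Proof.
  assert (H1 := fact_pos K). assert (H2 := fact_pos (S K)).
  auto_derive. auto. change (fact K + K * fact K)%nat with (fact (S K)). rewrite fact_S.
  change (match K with 0%nat => 1 | S _ => INR K + 1 end) with (INR (S K)).
  field. split. lra. apply not_0_INR; lia.
Qed.

Lemma pow_div_deriv n c s : c <> 0 -> is_derive (fun s => s ^ (S n) / c) s (INR (S n) * s ^ n / c).
Proof.
  intros Hc. auto_derive. auto. simpl pred.
  change (match n with 0%nat => 1 | S _ => INR n + 1 end) with (INR (S n)). field; auto.
Qed.

Lemma T_deriv K s : is_derive (T (S K)) s (- T K s).
Proof.
  induction K as [|K IH].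
  - unfold T; simpl. auto_derive; auto. field.
  - apply (der_ext (fun t => T (S K) t + (- t) ^ (S (S K)) / INR (fact (S (S K))))).
    intros; rewrite <- T_S; auto.
    apply (der_eq _ _ (- T K s + - ((- s) ^ (S K) / INR (fact (S K))))).
    rewrite T_S. ring.
    apply (der_plus (T (S K))); auto. apply term_deriv.
Qed.

Lemma R_bound K t : 0 <= t -> Rabs (exp (- t) - T K t) <= t ^ (K + 1) / INR (fact (K + 1)).
Proof.
  revert t. induction K as [|K IH]; intros t Ht.
  - assert (B := deriv_bound (fun s => exp (- s) - T 0 s) (fun s => s) (fun s => - exp (- s)) (fun _ => 1) 0 t Ht).
    cbv beta in B. rewrite T_0, Ropp_0, exp_0, Rminus_diag, !Rminus_0_r in B. simpl.
    replace (t * 1 / 1) with t by field.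
    apply B.
    + intros s Hs. unfold T; simpl. auto_derive; auto. ring.
    + intros; auto_derive; auto.
    + intros s Hs. rewrite Rabs_Ropp, Rabs_right by (left; apply exp_pos).
      rewrite <- exp_0. apply exp_le_3 || (apply exp_increasing_le || idtac). 
      destruct (Req_dec s 0) as [->|]. rewrite Ropp_0; lra. left; apply exp_increasing; lra.
  - assert (B := deriv_bound (fun s => exp (- s) - T (S K) s) (fun s => s ^ (S K + 1) / INR (fact (S K + 1)))
        (fun s => - (exp (- s) - T K s)) (fun s => s ^ (K + 1) / INR (fact (K + 1))) 0 t Ht).
    cbv beta in B. rewrite T_0, Ropp_0, exp_0, Rminus_diag, !Rminus_0_r in B.
    rewrite pow_i in B by lia. replace (0 / INR (fact (S K + 1))) with 0 in B by (unfold Rdiv; ring). rewrite Rminus_0_r in B.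
    apply B.
    + intros s Hs. apply (der_eq _ _ (- exp (- s) + - - T K s)). ring.
      apply (der_plus (fun s => exp (- s)) (fun s => - T (S K) s)). auto_derive; auto. ring.
      apply (is_derive_opp (T (S K))). apply T_deriv.
    + intros s Hs. assert (H1 := fact_pos (K + 1)).
      replace (S K + 1)%nat with (S (K + 1)) by lia. rewrite fact_S.
      apply (der_eq _ _ (INR (S (K + 1)) * s ^ (K + 1) / (INR (S (K + 1)) * INR (fact (K + 1))))).
      field. split; [lra|apply not_0_INR; lia].
      apply pow_div_deriv. apply Rmult_integral_contrapositive; split; [apply not_0_INR; lia|lra].
    + intros s Hs. rewrite Rabs_Ropp. apply IH. lra.
Qed.

Lemma neg_pow t k : (- t) ^ k = (-1) ^ k * t ^ k.
Proof. induction k as [|k IH]; simpl; [ring|rewrite IH; ring]. Qed.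

Lemma tqN N t : t * qN N t = 1 - T (S N) t.
Proof.
  induction N as [|N IH].
  - unfold qN, T; simpl. field.
  - change (qN (S N) t) with (qN N t + (-1) ^ (S N) * t ^ (S N) / INR (fact (S N + 1))).
    rewrite (T_S (S N)). rewrite Rmult_plus_distr_l, IH. replace (S N + 1)%nat with (S (S N)) by lia.
    rewrite neg_pow. assert (H := fact_pos (S (S N))). simpl pow. field. lra.
Qed.

Lemma term_n_deriv n t : is_derive (fun t => (-1) ^ n * t ^ (n + 1) / (INR (n + 1) * INR (fact (n + 1)))) t
  ((-1) ^ n * t ^ n / INR (fact (n + 1))).
Proof.
  assert (H1 := fact_pos (n + 1)). assert (H2 := INRn1 n).
  apply (der_ext (fun t => (-1) ^ n * (t ^ (S n) / (INR (n + 1) * INR (fact (n + 1)))))).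
  intros; unfold Rdiv; rewrite Nat.add_1_r; ring.
  apply (der_eq _ _ ((-1) ^ n * (INR (S n) * t ^ n / (INR (n + 1) * INR (fact (n + 1)))))).
  replace (S n) with (n + 1)%nat by lia. field; lra.
  apply is_derive_scal. apply pow_div_deriv. nra.
Qed.

Lemma QN_deriv N t : is_derive (QN N) t (qN N t).
Proof.
  induction N as [|N IH].
  - apply (term_n_deriv 0 t).
  - apply (der_plus (QN N) (fun t => (-1) ^ (S N) * t ^ (S N + 1) / (INR (S N + 1) * INR (fact (S N + 1))))); auto.
    apply term_n_deriv.
Qed.

Lemma PN_QN N x : 0 < x < 1 -> PN N x = (QN N (- ln (x * (1 - x))) - QN N (- ln x)) / x.
Proof.
  intros Hx. induction N as [|N IH].
  - unfold PN, QN, g. simpl sum_f_R0. assert (H1 := fact_pos (0 + 1)). assert (H2 := INRn1 0). field. lra.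
  - change (PN (S N) x) with (PN N x + (-1) ^ (S N) * g (S N) x / INR (fact (S N + 1))).
    change (QN (S N) ?t) with (QN N t + (-1) ^ (S N) * t ^ (S N + 1) / (INR (S N + 1) * INR (fact (S N + 1)))).
    rewrite IH. unfold g. assert (H1 := fact_pos (S N + 1)). assert (H2 := INRn1 (S N)). field. lra.
Qed.

Lemma q_qN_bound N t : 0 < t -> Rabs (q t - qN N t) <= t ^ (N + 1) / INR (fact (N + 2)).
Proof.
  intros Ht. assert (E : q t - qN N t = (T (S N) t - exp (- t)) / t).
  { unfold q. assert (H := tqN N t). apply Rmult_eq_reg_l with t; [|lra].
    replace (t * ((1 - exp (- t)) / t - qN N t)) with ((1 - exp (- t)) - t * qN N t) by (field; lra).
    rewrite H. field. lra. }
  rewrite E. unfold Rdiv at 1. rewrite Rabs_mult, Rabs_inv, (Rabs_right t) by lra.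
  rewrite <- Rabs_Ropp. replace (- (T (S N) t - exp (- t))) with (exp (- t) - T (S N) t) by ring.
  assert (B := R_bound (S N) t ltac:(lra)). replace (S N + 1)%nat with (N + 2)%nat in B by lia.
  apply Rmult_le_reg_r with t; auto.
  rewrite Rmult_assoc, Rinv_l, Rmult_1_r by lra.
  replace (t ^ (N + 1) / INR (fact (N + 2)) * t) with (t ^ (N + 2) / INR (fact (N + 2))); auto.
  replace (N + 2)%nat with (S (N + 1)) at 1 by lia. simpl. field. apply not_0_INR, fact_neq_0.
Qed.

Lemma P_PN_bound N x : 0 < x < 1 -> Rabs (P x - PN N x) <= g (N + 1) x / INR (fact (N + 2)).
Proof.
  intros Hx. rewrite P_Q, PN_QN by auto. destruct (L_props x Hx) as [H1 H2].
  set (L1 := - ln x) in *. set (L2 := - ln (x * (1 - x))) in *.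
  assert (Hf := fact_pos (N + 2)). assert (Hn2 : 0 < INR (N + 2)) by (apply lt_0_INR; lia).
  assert (B := deriv_bound (fun t => Q t - QN N t) (fun t => t ^ (S (N + 1)) / (INR (N + 2) * INR (fact (N + 2))))
     (fun t => q t - qN N t) (fun t => t ^ (N + 1) / INR (fact (N + 2))) L1 L2 H2).
  cbv beta in B.
  assert (Hg : g (N + 1) x / INR (fact (N + 2)) =
     ((L2 ^ S (N + 1) / (INR (N + 2) * INR (fact (N + 2))) - L1 ^ S (N + 1) / (INR (N + 2) * INR (fact (N + 2))))) / x).
  { unfold g. fold L1 L2. replace (N + 1 + 1)%nat with (S (N + 1)) by lia. replace (S (N + 1)) with (N + 2)%nat by lia. field. lra. }
  rewrite Hg.
  replace ((Q L2 - Q L1) / x - (QN N L2 - QN N L1) / x) with ((Q L2 - QN N L2 - (Q L1 - QN N L1)) / x) by (field; lra).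
  unfold Rdiv at 1. rewrite Rabs_mult, (Rabs_right (/ x)) by (left; apply Rinv_0_lt_compat; lra).
  apply Rmult_le_compat_r. left; apply Rinv_0_lt_compat; lra.
  apply B.
  - intros t Ht. apply (der_plus Q (fun t => - QN N t)). apply Q_deriv; lra.
    apply (is_derive_opp (QN N)). apply QN_deriv.
  - intros t Ht. apply (der_eq _ _ (INR (S (N + 1)) * t ^ (N + 1) / (INR (N + 2) * INR (fact (N + 2))))).
    replace (S (N + 1)) with (N + 2)%nat by lia. field. lra.
    apply pow_div_deriv. nra.
  - intros t Ht. apply q_qN_bound. lra.
Qed.

Lemma der_mult (f g : R -> R) (x df dg : R) : is_derive f x df -> is_derive g x dg ->
  is_derive (fun t => f t * g t) x (df * g x + f x * dg).
Proof. intros. apply (is_derive_mult f g); auto. intros; apply Rmult_comm. Qed.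

Lemma lix_cont : cont_on (fun x => li (x * (1 - x)) / x) 0 1.
Proof.
  intros x Hx. apply der_cont.
  assert (0 < x * (1 - x) < 1) by (split; nra).
  eexists. apply (der_mult (fun t => li (t * (1 - t))) (fun t => / t)).
  apply (der_comp li (fun t => t * (1 - t))). apply li_deriv; lra. auto_derive; auto.
  auto_derive. intuition lra. reflexivity.
Qed.

Lemma gm1_cont : cont_on gm1 0 1.
Proof.
  intros x Hx. apply der_cont. unfold gm1.
  assert (0 < x * (1 - x) < 1) by (split; nra).
  assert (ln x < 0) by (apply ln_neg01; lra). assert (ln (x * (1 - x)) < 0) by (apply ln_neg01; lra).
  auto_derive. replace (1 + - x) with (1 - x) by ring. intuition lra.
Qed.

Lemma P_cont : cont_on P 0 1.
Proof.
  intros x Hx. unfold P.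
  apply (continuous_ext_loc _ (fun x => gm1 x + - (li (x * (1 - x)) / x) + li x / x)).
  - exists (mkposreal (Rmin x (1 - x)) ltac:(apply Rmin_pos; lra)). intros y Hy.
    unfold ball in Hy; simpl in Hy. unfold AbsRing_ball, abs, minus, plus, opp in Hy; simpl in Hy.
    apply Rabs_def2 in Hy. assert (m1 := Rmin_l x (1 - x)). assert (m2 := Rmin_r x (1 - x)).
    assert (E : gm1 y + - (li (y * (1 - y)) / y) + li y / y = gm1 y - (li (y * (1 - y)) - li y) / y) by (field; lra). exact E.
  - apply (continuous_plus (fun x => gm1 x + - (li (x * (1 - x)) / x)) (fun x => li x / x)).
    apply (continuous_plus gm1 (fun x => - (li (x * (1 - x)) / x))). apply gm1_cont; auto.
    apply (continuous_opp (fun x => li (x * (1 - x)) / x)). apply lix_cont; auto.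
    apply li_over_x_cont; auto.
Qed.

Lemma J_exists : exists J, imp (fun x => li (x * (1 - x)) / x) 0 1 J.
Proof.
  assert (Hb : forall x, 0 < x < 1 -> 0 <= - (li (x * (1 - x)) / x) <= 1).
  { intros x Hx. assert (Hu : 0 < x * (1 - x) <= / 4) by (split; [nra|assert (H := Rle_0_sqr (2*x - 1)); unfold Rsqr in H; lra]).
    destruct (li_bound (x * (1 - x)) ltac:(lra)) as [A B].
    assert (Hl : 1 < - ln (x * (1 - x))).
    { assert (ln (x * (1 - x)) <= ln (/ 4)) by (apply ln_le; lra).
      rewrite ln_Rinv in H by lra.
      assert (1 < ln 4). { rewrite <- ln_exp at 1. apply ln_increasing. apply exp_pos.
        assert (H3 := exp_le_3). lra. }
      lra. }
    assert (x * (1 - x) / - ln (x * (1 - x)) <= x * (1 - x)).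
    { apply Rmult_le_reg_r with (- ln (x * (1 - x))). lra.
      replace (x * (1 - x) / - ln (x * (1 - x)) * - ln (x * (1 - x))) with (x * (1 - x)) by (field; lra). nra. }
    split.
    - apply Ropp_0_ge_le_contravar. apply Rle_ge. apply Rmult_le_0_r. lra. left; apply Rinv_0_lt_compat; lra.
    - replace (- (li (x * (1 - x)) / x)) with (- li (x * (1 - x)) / x) by (field; lra).
      apply Rmult_le_reg_r with x. lra. replace (- li (x * (1 - x)) / x * x) with (- li (x * (1 - x))) by (field; lra).
      nra. }
  assert (Hex : exists l, imp (fun x => - (li (x * (1 - x)) / x)) 0 1 l).
  { apply (imp_exists _ 0 1 1). lra.
    - intros x Hx. apply (continuous_opp (fun x => li (x * (1 - x)) / x)). apply lix_cont; auto.
    - intros; apply Hb; auto.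
    - intros c d Hc Hcd Hd. apply Rle_trans with (RInt (fun _ => 1) c d).
      apply RInt_le; auto. apply (cont_ex_RInt _ 0 1); auto.
      intros x Hx. apply (continuous_opp (fun x => li (x * (1 - x)) / x)). apply lix_cont; auto.
      apply ex_RInt_const. intros; apply Hb; lra.
      rewrite RInt_const. unfold scal; simpl; unfold mult; simpl. lra. }
  destruct Hex as [l Hl]. exists (-1 * l).
  apply (imp_ext (fun x => -1 * - (li (x * (1 - x)) / x))). intros; ring.
  apply imp_scal; auto.
Qed.

Lemma P_exists : exists SP, imp P 0 1 SP.
Proof.
  apply (imp_exists P 0 1 8). lra. apply P_cont.
  intros; apply P_bounds; auto.
  intros c d Hc Hcd Hd. apply Rle_trans with (RInt (g 0) c d).
  apply RInt_le; auto. apply (cont_ex_RInt _ 0 1); auto. apply P_cont.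
  apply (cont_ex_RInt _ 0 1); auto. apply g_cont.
  intros; apply P_bounds; lra.
  assert (H := RInt_g_bound 0 c d Hc Hcd Hd). simpl in H. lra.
Qed.

Definition Ival (n : nat) : R := proj1_sig (constructive_indefinite_description _ (I_exists n)).
Lemma Ival_spec n : imp (g n) 0 1 (Ival n) /\ Ival n <= 8 * INR (fact n).
Proof. unfold Ival. destruct (constructive_indefinite_description _ (I_exists n)) as [l Hl]. exact Hl. Qed.

Definition SN (N : nat) := sum_f_R0 (fun n => (-1) ^ n * Ival n / INR (fact (n + 1))) N.

Lemma imp_PN N : imp (PN N) 0 1 (SN N).
Proof.
  induction N as [|N IH].
  - unfold PN, SN. change (sum_f_R0 ?f 0%nat) with (f 0%nat). cbv beta.
    apply (imp_ext (fun x => ((-1) ^ 0 / INR (fact (0 + 1))) * g 0 x)). intros; unfold Rdiv; ring.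
    replace ((-1) ^ 0 * Ival 0 / INR (fact (0 + 1))) with (((-1) ^ 0 / INR (fact (0 + 1))) * Ival 0) by (unfold Rdiv; ring).
    apply imp_scal. apply Ival_spec.
  - change (SN (S N)) with (SN N + (-1) ^ (S N) * Ival (S N) / INR (fact (S N + 1))).
    apply (imp_ext (fun x => PN N x + ((-1) ^ (S N) / INR (fact (S N + 1))) * g (S N) x)).
    intros; change (PN (S N) x) with (PN N x + (-1) ^ (S N) * g (S N) x / INR (fact (S N + 1))); unfold Rdiv; ring.
    replace ((-1) ^ (S N) * Ival (S N) / INR (fact (S N + 1))) with (((-1) ^ (S N) / INR (fact (S N + 1))) * Ival (S N)) by (unfold Rdiv; ring).
    apply imp_plus; auto. apply imp_scal. apply Ival_spec.
Qed.

Lemma SN_bound N SP : imp P 0 1 SP -> Rabs (SN N - SP) <= 8 / INR (N + 2).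
Proof.
  intros HP.
  assert (H1 := imp_plus _ _ _ _ _ _ (imp_PN N) (imp_scal (-1) _ _ _ _ HP)).
  destruct (Ival_spec (N + 1)) as [Hg HI].
  assert (Hf := fact_pos (N + 2)).
  assert (H2 := imp_scal (/ INR (fact (N + 2))) _ _ _ _ Hg).
  assert (H3 := imp_scal (- / INR (fact (N + 2))) _ _ _ _ Hg).
  assert (Hpt : forall x, 0 < x < 1 -> - / INR (fact (N + 2)) * g (N + 1) x <= PN N x + -1 * P x <= / INR (fact (N + 2)) * g (N + 1) x).
  { intros x Hx. assert (B := P_PN_bound N x Hx). rewrite <- Rabs_Ropp in B.
    apply Rabs_le_between in B. unfold Rdiv in B. lra. }
  assert (U := imp_le _ _ 0 1 _ _ ltac:(lra) H1 H2 ltac:(intros; apply Hpt; auto)).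
  assert (L := imp_le _ _ 0 1 _ _ ltac:(lra) H3 H1 ltac:(intros; apply Hpt; auto)).
  assert (E : INR (fact (N + 2)) = INR (N + 2) * INR (fact (N + 1))).
  { replace (N + 2)%nat with (S (N + 1)) by lia. rewrite fact_S. auto. }
  assert (Hn : 0 < INR (N + 2)) by (apply lt_0_INR; lia).
  assert (Hf1 := fact_pos (N + 1)).
  assert (K : / INR (fact (N + 2)) * Ival (N + 1) <= 8 / INR (N + 2)).
  { rewrite E. apply Rmult_le_reg_l with (INR (N + 2) * INR (fact (N + 1))). nra.
    replace (INR (N + 2) * INR (fact (N + 1)) * (/ (INR (N + 2) * INR (fact (N + 1))) * Ival (N + 1))) with (Ival (N + 1)) by (field; lra).
    replace (INR (N + 2) * INR (fact (N + 1)) * (8 / INR (N + 2))) with (8 * INR (fact (N + 1))) by (field; lra). lra. }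
  apply Rabs_le. lra.
Qed.

Theorem theorem4 :
  exists (Im1 : R) (I : nat -> R) (li_f : R -> R) (J S : R),
    int_T (fun x y => / (x * y * (- ln (x * y)))) Im1 /\
    (forall n : nat, int_T (fun x y => (- ln (x * y)) ^ n / (x * y)) (I n)) /\
    (forall x, 0 < x < 1 -> li_is (x - x ^ 2) (li_f x)) /\
    improper_int (fun x => li_f x / x) 0 1 J /\
    infinite_sum (fun n => (-1) ^ n * I n / INR (Factorial.fact (n + 1))) S /\
    Im1 = S + J + 1.
Proof.
  destruct P_exists as [SP HP]. destruct J_exists as [J HJ].
  exists (SP + J + 1), Ival, (fun x => li (x - x ^ 2)), J, SP.
  split; [|split; [|split; [|split; [|split]]]].
  - exists gm1. split. intros; apply inner_m1; auto.
    apply imp_improper. replace (SP + J + 1) with (SP + J + -1 * -1) by ring.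
    apply (imp_ext (fun x => P x + li (x * (1 - x)) / x + -1 * (li x / x))).
    intros x Hx. unfold P. field. lra.
    apply imp_plus. apply imp_plus; auto. apply imp_scal. apply imp_li_over_x.
  - intros n. exists (g n). split. intros; apply inner_n; auto.
    apply imp_improper. apply Ival_spec.
  - intros x Hx. apply li_is_li. simpl. split; nra.
  - apply imp_improper. apply (imp_ext (fun x => li (x * (1 - x)) / x)); auto.
    intros x Hx. replace (x - x ^ 2) with (x * (1 - x)) by ring. reflexivity.
  - intros eps Heps.
    destruct (nfloor_ex (8 / eps)) as [m Hm]. { left; apply Rdiv_lt_0_compat; lra. }
    exists m. intros n Hn. unfold Rdist. change (sum_f_R0 _ n) with (SN n).
    apply Rle_lt_trans with (8 / INR (n + 2)). apply SN_bound; auto.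
    assert (Hmn : INR m <= INR n) by (apply le_INR; lia).
    assert (Hn2 : INR (n + 2) = INR n + 2) by (rewrite plus_INR; simpl; ring).
    rewrite Hn2. assert (Hpn := pos_INR n). apply Rmult_lt_reg_r with ((INR n + 2) / eps). apply Rdiv_lt_0_compat; lra.
    replace (8 / (INR n + 2) * ((INR n + 2) / eps)) with (8 / eps) by (field; lra).
    replace (eps * ((INR n + 2) / eps)) with (INR n + 2) by (field; lra). lra.
  - reflexivity.
Qed.
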